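(* Let $A$ be a $2$-pole with $t(A)=(a+2,\,a,\,n)$. Let $A'$ be the $2$-pole constructed from $A$ as follows: take two disjoint copies of $A$ and four new vertices $x_1,x_2,y_1,y_2$; attach one dangling edge of each copy of $A$ to $x_1$ and the other dangling edge of each copy to $x_2$; add the edges of the path $x_1y_1y_2x_2$; finally add one dangling edge at $y_1$ and one dangling edge at $y_2$ (these two are the dangling edges of $A'$). Then $t(A')=(2a+4,\,2a+2,\,2n+4)$.
   Context: An $r$-pole ($r\in\{2,3\}$) is a finite graph together with $r$ dangling edges, each dangling edge being a half-edge attached to exactly one vertex, such that every vertex has degree $3$ when dangling edges are counted (a $2$-pole arises, e.g., from a $2$-edge-connected cubic graph by cutting one edge into two dangling edges). An even factor of an $r$-pole $P$ is a set $F$ of edges and dangling edges of $P$ such that every vertex of $P$ is incident with either $0$ or $2$ elements of $F$; the number of dangling edges in $F$ is always even. Thus $F$ decomposes into disjoint circuits, isolated vertices (vertices incident with no element of $F$), and, if $F$ contains two dangling edges, one path starting and ending with a dangling edge. The excess of $F$ is $q(P,F)=2c+v$, where $c$ is the number of circuits of $F$ and $v$ is the number of isolated vertices (the path through dangling edges contributes nothing). For an $r$-pole $P$ we set $t(P)=(q_0(P),q_2(P),n(P))$, where $q_0(P)$ is the minimum of $q(P,F)$ over all even factors $F$ containing no dangling edges, $q_2(P)$ is the minimum of $q(P,F)$ over all even factors $F$ containing two dangling edges, and $n(P)$ is the number of vertices of $P$. *)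

(* Defs.v *)
From mathcomp Require Import all_boot.
Set Warnings "-notation-overridden".
Set Implicit Arguments. Unset Strict Implicit. Unset Printing Implicit Defensive.

(* An r-pole: a finite multigraph (parallel edges and loops allowed; a loop
   counts twice towards the degree) on vertex type pV with edge type pE,
   each edge e having endpoints (pends e).1 and (pends e).2, together with
   r dangling edges indexed by 'I_r, dangling edge d being attached to
   vertex (patt P d). *)
Record pole (r : nat) := Pole {
  pV : finType;
  pE : finType;
  pends : pE -> pV * pV;
  patt : 'I_r -> pV }.

Section Poles.
Variables (r : nat) (P : pole r).

Definition incid (F : {set pE P}) (G : {set 'I_r}) (v : pV P) : nat :=
  #|[set e in F | (pends e).1 == v]| + #|[set e in F | (pends e).2 == v]|
  + #|[set d in G | patt P d == v]|.

Definition cubic_pole : Prop := forall v : pV P, incid setT setT v = 3.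

Definition even_factor (F : {set pE P}) (G : {set 'I_r}) : Prop :=
  forall v : pV P, incid F G v = 0 \/ incid F G v = 2.

Definition adjF (F : {set pE P}) : rel (pV P) :=
  fun u w => [exists e in F, (pends e == (u, w)) || (pends e == (w, u))].

Definition compF (F : {set pE P}) (v : pV P) : {set pV P} :=
  [set w | connect (adjF F) v w].

Definition circuits (F : {set pE P}) (G : {set 'I_r}) : {set {set pV P}} :=
  [set C : {set pV P} |
     [exists v, (incid F G v == 2) && (C == compF F v)]
     && [forall d in G, patt P d \notin C]].

Definition isolated (F : {set pE P}) (G : {set 'I_r}) : {set pV P} :=
  [set v | incid F G v == 0].

Definition excess (F : {set pE P}) (G : {set 'I_r}) : nat :=
  2 * #|circuits F G| + #|isolated F G|.

Definition q0_is (k : nat) : Prop :=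
  (exists F, even_factor F set0 /\ excess F set0 = k) /\
  (forall F, even_factor F set0 -> k <= excess F set0).

Definition q2_is (k : nat) : Prop :=
  (exists F G, even_factor F G /\ #|G| = 2 /\ excess F G = k) /\
  (forall F G, even_factor F G -> #|G| = 2 -> k <= excess F G).

Definition nverts : nat := #|pV P|.

Definition t_is (q0 q2 n : nat) : Prop := [/\ q0_is q0, q2_is q2 & nverts = n].

End Poles.

(* Vertices: two copies of A, plus x1,x2,y1,y2 = ordinals 0,1,2,3 of 'I_4.
   Edges: edges of the two copies; for each copy b and dangling edge i of A
   an edge from the attachment vertex to x_(i+1) (dangling edge 0 goes to x1,
   dangling edge 1 to x2); and the three path edges x1y1, y1y2, y2x2. *)
Section Construction.
Variable A : pole 2.

Definition dV : finType := ((pV A + pV A) + 'I_4)%type.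
Definition dE : finType := ((pE A + pE A) + ((bool * 'I_2) + 'I_3))%type.

Definition vx1 : dV := inr (@Ordinal 4 0 isT).
Definition vx2 : dV := inr (@Ordinal 4 1 isT).
Definition vy1 : dV := inr (@Ordinal 4 2 isT).
Definition vy2 : dV := inr (@Ordinal 4 3 isT).

Definition copy (b : bool) (v : pV A) : dV :=
  if b then inl (inr v) else inl (inl v).

Definition xof (i : 'I_2) : dV := if val i == 0 then vx1 else vx2.

Definition pathedge (j : 'I_3) : dV * dV :=
  match val j with
  | 0 => (vx1, vy1)
  | 1 => (vy1, vy2)
  | _ => (vy2, vx2)
  end.

Definition dends (e : dE) : dV * dV :=
  match e with
  | inl (inl e0) => (copy false (pends e0).1, copy false (pends e0).2)
  | inl (inr e1) => (copy true (pends e1).1, copy true (pends e1).2)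
  | inr (inl (b, i)) => (copy b (patt A i), xof i)
  | inr (inr j) => pathedge j
  end.

Definition datt (d : 'I_2) : dV := if val d == 0 then vy1 else vy2.

Definition doubled : pole 2 := @Pole 2 dV dE dends datt.

End Construction.

(* Main.v *)
Require Import Defs.
Set Warnings "-notation-overridden".
From mathcomp Require Import all_boot zify.
Set Implicit Arguments. Unset Strict Implicit. Unset Printing Implicit Defensive.


Lemma card_setE (T : finType) (P : pred T) : #|[set x | P x]| = \sum_x P x.
Proof.
rewrite -sum1_card big_mkcond /=; apply: eq_bigr => x _; rewrite inE; by case: (P x).
Qed.

Lemma sum_fiber (T U : finType) (F : {set T}) (f : T -> U) :
  \sum_v #|[set e in F | f e == v]| = #|F|.
Proof.
under eq_bigr => v _ do rewrite card_setE.
rewrite exchange_big /= -sum1_card [in RHS]big_mkcond /=; apply: eq_bigr => e _.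
case: (e \in F) => /=; last by rewrite big1.
rewrite (bigD1 (f e)) //= eqxx big1 // => v /negbTE; rewrite eq_sym => ->; done.
Qed.

Section G.
Variables (r : nat) (P : pole r).

Lemma sum_incid (F : {set pE P}) (G : {set 'I_r}) :
  \sum_v incid F G v = 2 * #|F| + #|G|.
Proof.
by rewrite /incid !big_split /= !sum_fiber mul2n -addnn.
Qed.

Lemma even_parity (F : {set pE P}) (G : {set 'I_r}) : even_factor F G -> ~~ odd #|G|.
Proof.
move=> hF.
have : ~~ odd (\sum_v incid F G v).
  apply: (big_ind (fun n => ~~ odd n)) => //.
    by move=> x y hx hy; rewrite oddD (negbTE hx) (negbTE hy).
  by move=> v _; case: (hF v) => ->.
by rewrite sum_incid oddD oddM /=.
Qed.

Lemma adj_sym (F : {set pE P}) : symmetric (adjF F).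
Proof.
move=> u w; apply/existsP/existsP => [] [e /andP[eF h]]; exists e;
  by rewrite eF orbC.
Qed.

Lemma closed_adj (F : {set pE P}) (a : {set pV P}) :
  (forall e, e \in F -> ((pends e).1 \in a) = ((pends e).2 \in a)) ->
  closed (adjF F) a.
Proof.
move=> h x y /existsP[e /andP[eF /orP[/eqP E|/eqP E]]]; have := h e eF;
  by rewrite E.
Qed.

Lemma compF_same (F : {set pE P}) u w : w \in compF F u -> compF F u = compF F w.
Proof.
rewrite inE => h; apply/setP => z; rewrite !inE.
exact: (same_connect (sym_connect_sym (@adj_sym F)) h).
Qed.

Lemma compF_refl (F : {set pE P}) u : u \in compF F u.
Proof. by rewrite inE connect0. Qed.

Lemma compF_adj (F : {set pE P}) v x y :
  adjF F x y -> (x \in compF F v) = (y \in compF F v).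
Proof. move=> h; rewrite !inE; exact: (connect_closed (sym_connect_sym (@adj_sym F)) v h). Qed.

Lemma edge_adj (F : {set pE P}) e : e \in F -> adjF F (pends e).1 (pends e).2.
Proof. by move=> eF; apply/existsP; exists e; rewrite eF -surjective_pairing eqxx. Qed.

End G.

Lemma connect_map (T T' : finType) (e : rel T) (e' : rel T') (f : T -> T') :
  (forall x y, e x y -> e' (f x) (f y)) ->
  forall x y, connect e x y -> connect e' (f x) (f y).
Proof.
move=> hf x y /connectP[p]; elim: p x => [|z p IH] x /=.
  by move=> _ ->.
case/andP=> exz pz ly; apply: connect_trans (connect1 (hf _ _ exz)) (IH _ pz ly).
Qed.


Lemma sum_pair (I J : finType) (f : I * J -> nat) :
  \sum_p f p = \sum_i \sum_j f (i, j).
Proof. by rewrite pair_bigA; apply: eq_bigr => -[]. Qed.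

Lemma eq_inl (T1 T2 : eqType) (x y : T1) : (inl x == inl y :> T1 + T2) = (x == y).
Proof. by []. Qed.
Lemma eq_inr (T1 T2 : eqType) (x y : T2) : (inr x == inr y :> T1 + T2) = (x == y).
Proof. by []. Qed.
Lemma eq_inlr (T1 T2 : eqType) (x : T1) (y : T2) : (inl x == inr y :> T1 + T2) = false.
Proof. by []. Qed.
Lemma eq_inrl (T1 T2 : eqType) (x : T2) (y : T1) : (inr x == inl y :> T1 + T2) = false.
Proof. by []. Qed.

Lemma sum_andF (I : finType) (P Q : pred I) :
  (forall i, Q i = false) -> \sum_i (P i && Q i) = 0.
Proof. by move=> h; apply: big1 => i _; rewrite h andbF. Qed.

Lemma eqS0 n : (n.+1 == 0) = false. Proof. by []. Qed.
Lemma eq0S n : (0 == n.+1) = false. Proof. by []. Qed.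
Definition j0 : 'I_3 := @Ordinal 3 0 isT.
Definition j1 : 'I_3 := @Ordinal 3 1 isT.
Definition j2 : 'I_3 := @Ordinal 3 2 isT.
Definition i0 : 'I_2 := @Ordinal 2 0 isT.
Definition i1 : 'I_2 := @Ordinal 2 1 isT.
Definition k0 : 'I_4 := @Ordinal 4 0 isT.
Definition k1 : 'I_4 := @Ordinal 4 1 isT.
Definition k2 : 'I_4 := @Ordinal 4 2 isT.
Definition k3 : 'I_4 := @Ordinal 4 3 isT.
Lemma sum3 (f : 'I_3 -> nat) : \sum_j f j = f j0 + f j1 + f j2.
Proof.
rewrite !big_ord_recl big_ord0 addn0 addnA; congr (f _ + f _ + f _); exact: val_inj.
Qed.
Lemma sum2 (f : 'I_2 -> nat) : \sum_j f j = f i0 + f i1.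
Proof.
rewrite !big_ord_recl big_ord0 addn0; congr (f _ + f _); exact: val_inj.
Qed.
Lemma sum4 (f : 'I_4 -> nat) : \sum_j f j = f k0 + f k1 + f k2 + f k3.
Proof.
rewrite !big_ord_recl big_ord0 addn0 !addnA; congr (f _ + f _ + f _ + f _); exact: val_inj.
Qed.
Lemma I2_cases (i : 'I_2) : i = i0 \/ i = i1.
Proof. case: i => [[|[|m]] h]; [left|right|by []]; exact: val_inj. Qed.
Lemma I3_cases (i : 'I_3) : [\/ i = j0, i = j1 | i = j2].
Proof. case: i => [[|[|[|m]]] h]; [apply: Or31|apply: Or32|apply: Or33|by []]; exact: val_inj. Qed.
Lemma I4_cases (i : 'I_4) : [\/ i = k0, i = k1, i = k2 | i = k3].
Proof. case: i => [[|[|[|[|m]]]] h]; [apply: Or41|apply: Or42|apply: Or43|apply: Or44|by []]; exact: val_inj. Qed.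

Section D.
Variable A : pole 2.
Notation D := (doubled A).

Definition cedge (b : bool) (e : pE A) : dE A := inl (if b then inr e else inl e).
Definition conn (b : bool) (i : 'I_2) : dE A := inr (inl (b, i)).
Definition pth (j : 'I_3) : dE A := inr (inr j).
Definition Fc (F : {set pE D}) b : {set pE A} := [set e | cedge b e \in F].
Definition Gc (F : {set pE D}) b : {set 'I_2} := [set i | conn b i \in F].

Lemma pathedge_inr j : exists k k', pathedge A j = (inr k, inr k').
Proof. case: j => [[|[|k]] ?]; rewrite /pathedge /=; do 2 eexists; reflexivity. Qed.
Lemma xof_inr i : exists k, xof A i = inr k.
Proof. rewrite /xof; case: ifP; eexists; reflexivity. Qed.
Lemma datt_inr i : exists k, datt A i = inr k.
Proof. rewrite /datt; case: ifP; eexists; reflexivity. Qed.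

Lemma incid_copy (F : {set pE D}) (G : {set 'I_2}) b v :
  incid F G (copy b v) = incid (Fc F b) (Gc F b) v.
Proof.
rewrite /incid !card_setE /= !big_sumType /= !sum_pair !big_bool /=.
have P1 : forall j : 'I_3, (pathedge A j).1 == copy b v = false.
  by move=> j; case: (pathedge_inr j) => [k [k' ->]]; case: (b).
have P2 : forall j : 'I_3, (pathedge A j).2 == copy b v = false.
  by move=> j; case: (pathedge_inr j) => [k [k' ->]]; case: (b).
have X : forall i, xof A i == copy b v = false.
  by move=> i; case: (xof_inr i) => [k ->]; case: (b).
have Dt : forall i, datt A i == copy b v = false.
  by move=> i; case: (datt_inr i) => [k ->]; case: (b).
rewrite [\sum_(i < 3) _]big1; last by move=> j _; rewrite P1 andbF.
rewrite [\sum_(i < 3) _]big1; last by move=> j _; rewrite P2 andbF.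
rewrite [\sum_(j < 2) (_ && (xof A j == _))]big1; last by move=> j _; rewrite X andbF.
rewrite [\sum_(j < 2) (_ && (xof A j == _))]big1; last by move=> j _; rewrite X andbF.
rewrite [\sum_(j < 2) (_ && (datt A j == _))]big1; last by move=> j _; rewrite Dt andbF.
clear P1 P2 X Dt.
case: b => /=; do ! rewrite (@sum_andF _ _ (fun _ => false)) //;
  rewrite !addn0 !add0n -addnA [X in _ + X]addnC addnA;
  congr (_ + _ + _); apply: eq_bigr => i _; by rewrite inE.
Qed.

Ltac incid_tac :=
  rewrite /incid !card_setE /= !big_sumType /= !sum_pair !big_bool /=;
  do ! rewrite (@sum_andF _ _ (fun _ => false)) //;
  rewrite !sum3 !sum2 /= /xof /datt /= /vx1 /vx2 /vy1 /vy2 !eq_inr -!val_eqE /=;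
  rewrite ?eqSS ?eqS0 ?eq0S ?eqxx !andbT !andbF /conn /pth /=; lia.

Lemma incid_x1 (F : {set pE D}) (G : {set 'I_2}) :
  incid F G (vx1 A) = (conn false i0 \in F) + (conn true i0 \in F) + (pth j0 \in F).
Proof. incid_tac. Qed.
Lemma incid_x2 (F : {set pE D}) (G : {set 'I_2}) :
  incid F G (vx2 A) = (conn false i1 \in F) + (conn true i1 \in F) + (pth j2 \in F).
Proof. incid_tac. Qed.
Lemma incid_y1 (F : {set pE D}) (G : {set 'I_2}) :
  incid F G (vy1 A) = (pth j0 \in F) + (pth j1 \in F) + (i0 \in G).
Proof. incid_tac. Qed.
Lemma incid_y2 (F : {set pE D}) (G : {set 'I_2}) :
  incid F G (vy2 A) = (pth j1 \in F) + (pth j2 \in F) + (i1 \in G).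
Proof. incid_tac. Qed.

Definition isoxy (F : {set pE D}) (G : {set 'I_2}) : nat :=
  #|[set k : 'I_4 | incid F G (inr k) == 0]|.

Lemma iso_dec (F : {set pE D}) (G : {set 'I_2}) :
  #|isolated F G| = #|isolated (Fc F false) (Gc F false)|
                    + #|isolated (Fc F true) (Gc F true)| + isoxy F G.
Proof.
rewrite /isolated /isoxy !card_setE big_sumType big_sumType /=.
congr (_ + _ + _); apply: eq_bigr => v _.
  by rewrite (incid_copy F G false v).
by rewrite (incid_copy F G true v).
Qed.

End D.


Section D.
Variable A : pole 2.
Notation D := (doubled A).

Lemma copy_eq b b' (w w' : pV A) : copy b w = copy b' w' -> b = b' /\ w = w'.
Proof. by case: b; case: b' => //= -[->]. Qed.

Lemma copy_inj b : injective (@copy A b).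
Proof. by move=> w w' /copy_eq[]. Qed.

Lemma mem_copy_copy b b' (C : {set pV A}) (w : pV A) :
  (copy b' w \in copy b @: C) = (b' == b) && (w \in C).
Proof.
apply/imsetP/andP => [[y yC /copy_eq [-> ->]]|[/eqP -> wC]]; first by rewrite eqxx.
by exists w.
Qed.

Lemma mem_copy_inr b (C : {set pV A}) k : (inr k \in copy b @: C) = false.
Proof. by apply/imsetP => -[y _]; case: b. Qed.

Lemma dV_cases (x : dV A) : (exists b w, x = copy b w) \/ exists k, x = inr k.
Proof.
case: x => [[w|w]|k]; [left; exists false, w | left; exists true, w | right; exists k]; done.
Qed.

Lemma copy_hom (F : {set pE D}) b x y :
  adjF (Fc F b) x y -> adjF F (copy b x) (copy b y).
Proof.
case/existsP => e /andP[]; rewrite inE => eF h; apply/existsP; exists (cedge b e).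
rewrite eF /=; case/orP: h => /eqP E; case: (b) => /=; rewrite E /= eqxx ?orbT //.
Qed.

Lemma img_comp (F : {set pE D}) b v :
  (forall i, i \in Gc F b -> patt A i \notin compF (Fc F b) v) ->
  copy b @: compF (Fc F b) v = compF F (copy b v).
Proof.
move=> hG; apply/setP => z; apply/idP/idP.
  case/imsetP => w; rewrite !inE => wC ->.
  by apply: (connect_map (@copy_hom F b)).
rewrite inE => h.
set a := copy b @: compF (Fc F b) v.
have cl : closed (adjF F) a.
  apply: closed_adj => e eF.
  case: e eF => [[e0|e0]|[[b' i]|j]] eF /=.
  - rewrite /a !(mem_copy_copy b false); case: eqP => //= <-.
    apply: compF_adj; apply: edge_adj; by rewrite inE.
  - rewrite /a !(mem_copy_copy b true); case: eqP => //= <-.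
    apply: compF_adj; apply: edge_adj; by rewrite inE.
  - case: (xof_inr A i) => k ->; rewrite /a mem_copy_inr mem_copy_copy.
    case: eqP => //= Eb; subst b'; apply/negbTE; apply: hG; by rewrite inE.
  - by case: (pathedge_inr A j) => [k [k' ->]] /=; rewrite /a !mem_copy_inr.
by rewrite -(closed_connect cl h) mem_copy_copy eqxx compF_refl.
Qed.


Lemma circ_nonempty r (P : pole r) (F : {set pE P}) G C :
  C \in circuits F G -> exists v, v \in C.
Proof.
rewrite inE => /andP[/existsP[v /andP[_ /eqP ->]] _]; exists v; exact: compF_refl.
Qed.

Definition Ib (F : {set pE D}) b : {set {set dV A}} :=
  [set copy b @: (C : {set pV A}) | C in circuits (Fc F b) (Gc F b)].
Definition Ex (F : {set pE D}) (G : {set 'I_2}) : {set {set dV A}} :=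
  [set C in circuits F G | [exists k, inr k \in C]].

Lemma circ_img (F : {set pE D}) G b (C : {set pV A}) :
  C \in circuits (Fc F b) (Gc F b) -> copy b @: C \in circuits F G.
Proof.
rewrite inE => /andP[/existsP[v /andP[/eqP iv /eqP EC]] /forallP hd].
have hG : forall i, i \in Gc F b -> patt A i \notin compF (Fc F b) v.
  by move=> i iG; rewrite -EC; exact: (implyP (hd i) iG).
rewrite inE; apply/andP; split.
  apply/existsP; exists (copy b v); rewrite (incid_copy F G b v) iv eqxx /=.
  by rewrite EC img_comp.
apply/forallP => d; apply/implyP => _.
by case: (datt_inr A d) => k; rewrite /= => ->; rewrite mem_copy_inr.
Qed.

Lemma circ_cases (F : {set pE D}) G (C : {set dV A}) :
  C \in circuits F G -> C \in Ib F false :|: Ib F true :|: Ex F G.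
Proof.
move=> hC; case: (boolP [exists k, inr k \in C]) => hk.
  by apply/setUP; right; rewrite /Ex in_set hC hk.
move: (hC); rewrite inE => /andP[/existsP[u /andP[/eqP iu /eqP EC]] /forallP hd].
case: (dV_cases u) => [[b [w Eu]]|[k Eu]]; last first.
  case/negP: hk; apply/existsP; exists k; rewrite EC -Eu. by rewrite inE connect0.
subst u.
have hG : forall i, i \in Gc F b -> patt A i \notin compF (Fc F b) w.
  move=> i; rewrite inE => iF; apply/negP => hp.
  case/negP: hk; case: (xof_inr A i) => k Ek; apply/existsP; exists k.
  have h1 : copy b (patt A i) \in C.
    rewrite EC inE; apply: (connect_map (@copy_hom F b)); by rewrite inE in hp.
  have := edge_adj iF; rewrite /= Ek => hadj.
  by rewrite EC -(@compF_adj _ _ F (copy b w) _ _ hadj) -EC.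
have Cw : compF (Fc F b) w \in circuits (Fc F b) (Gc F b).
  rewrite inE; apply/andP; split.
    by apply/existsP; exists w; rewrite -(incid_copy F G b w) iu !eqxx.
  by apply/forallP => i; apply/implyP; exact: hG.
have -> : C = copy b @: compF (Fc F b) w by rewrite EC img_comp.
move: Cw; clear; case: b => Cw; apply/setUP; left; apply/setUP; [right|left];
  by apply/imsetP; eexists; first exact: Cw.
Qed.

Lemma circ_dec (F : {set pE D}) G :
  #|circuits F G| = #|circuits (Fc F false) (Gc F false)|
                    + #|circuits (Fc F true) (Gc F true)| + #|Ex F G|.
Proof.
have EQ : circuits F G = Ib F false :|: Ib F true :|: Ex F G.
  apply/setP => X; apply/idP/idP; first exact: circ_cases.
  case/setUP => [/setUP[]|].
  - by case/imsetP => C hC ->; exact: circ_img.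
  - by case/imsetP => C hC ->; exact: circ_img.
  - by rewrite /Ex in_set => /andP[].
have cI : forall b, #|Ib F b| = #|circuits (Fc F b) (Gc F b)|.
  by move=> b; rewrite card_imset //; exact: imset_inj (@copy_inj b).
have d1 : Ib F false :&: Ib F true = set0.
  apply/setP => X; rewrite in_setI in_set0; apply/negP => /andP[/imsetP[C1 h1 ->] /imsetP[C2 h2 E]].
  case: (circ_nonempty h1) => v vC.
  have : copy false v \in copy true @: C2 by rewrite -E mem_copy_copy eqxx.
  by rewrite mem_copy_copy.
have d2 : (Ib F false :|: Ib F true) :&: Ex F G = set0.
  apply/setP => X; rewrite in_setI in_set0; apply/negP => /andP[h].
  rewrite /Ex in_set => /andP[_ /existsP[k hk]].
  by case/setUP: h => /imsetP[C _ E]; move: hk; rewrite E mem_copy_inr.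
by rewrite EQ cardsU d2 cards0 subn0 cardsU d1 cards0 subn0 !cI.
Qed.

Lemma excess_dec (F : {set pE D}) G :
  excess F G = excess (Fc F false) (Gc F false) + excess (Fc F true) (Gc F true)
               + 2 * #|Ex F G| + isoxy F G.
Proof. rewrite /excess circ_dec iso_dec; lia. Qed.

End D.


Lemma circ_of r (P : pole r) (F : {set pE P}) G u :
  incid F G u = 2 -> (forall d, d \in G -> patt P d \notin compF F u) ->
  compF F u \in circuits F G.
Proof.
move=> iu hd; rewrite inE; apply/andP; split.
  by apply/existsP; exists u; rewrite iu !eqxx.
by apply/forallP => d; apply/implyP; exact: hd.
Qed.

Section D.
Variable A : pole 2.
Notation D := (doubled A).

Lemma Gc_card (F : {set pE D}) b : #|Gc F b| = (conn A b i0 \in F) + (conn A b i1 \in F).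
Proof. by rewrite card_setE sum2. Qed.

Lemma isoxyE (F : {set pE D}) G : isoxy F G =
  (incid F G (vx1 A) == 0) + (incid F G (vx2 A) == 0) + (incid F G (vy1 A) == 0) + (incid F G (vy2 A) == 0).
Proof. by rewrite /isoxy card_setE sum4. Qed.

Lemma Ex_lb (F : {set pE D}) G k : compF F (inr k) \in circuits F G -> 1 <= #|Ex F G|.
Proof.
move=> h; rewrite card_gt0; apply/set0Pn; exists (compF F (inr k)).
rewrite /Ex in_set h /=; apply/existsP; exists k; by rewrite inE connect0.
Qed.

Variables (a : nat).
Hypothesis hq0 : forall F : {set pE A}, even_factor F set0 -> a + 2 <= excess F set0.
Hypothesis hq2 : forall (F : {set pE A}) G, even_factor F G -> #|G| = 2 -> a <= excess F G.

Lemma copy_lb (F : {set pE D}) G b : even_factor F G ->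
  ((conn A b i0 \in F) = (conn A b i1 \in F)) /\ a + 2 * ~~(conn A b i0 \in F) <= excess (Fc F b) (Gc F b).
Proof.
move=> ev; have evb : even_factor (Fc F b) (Gc F b).
  by move=> v; rewrite -(incid_copy F G b v); exact: ev.
have par := even_parity evb; rewrite Gc_card in par.
case E0: (conn A b i0 \in F); case E1: (conn A b i1 \in F); rewrite E0 E1 in par => //=.
  split => //; rewrite muln0 addn0; apply: (hq2 evb); by rewrite Gc_card E0 E1.
split => //; have G0 : Gc F b = set0 by apply: cards0_eq; rewrite Gc_card E0 E1.
by rewrite G0 in evb *; exact: hq0.
Qed.

Lemma lb0 (F : {set pE D}) : even_factor F set0 -> 2 * a + 4 <= excess F set0.
Proof.
move=> ev; rewrite excess_dec isoxyE.
have [e0 l0] := copy_lb false ev; have [e1 l1] := copy_lb true ev.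
have Ey1 : incid F set0 (vy1 A) = 2 -> 1 <= #|Ex F set0|.
  move=> h; apply: (@Ex_lb F set0 k2); apply: (circ_of h) => d; by rewrite in_set0.
have Ex1 : incid F set0 (vx1 A) = 2 -> 1 <= #|Ex F set0|.
  move=> h; apply: (@Ex_lb F set0 k0); apply: (circ_of h) => d; by rewrite in_set0.
have := ev (vx1 A); have := ev (vx2 A); have := ev (vy1 A); have := ev (vy2 A).
rewrite incid_x1 incid_x2 incid_y1 incid_y2 in Ey1 Ex1 *.
rewrite !in_set0 in Ey1 Ex1 *.
lia.
Qed.

Lemma S_closed (F : {set pE D}) : pth A j0 \notin F -> pth A j2 \notin F ->
  closed (adjF F) [set vy1 A; vy2 A].
Proof.
move=> h0 h2; apply: closed_adj => e eF; case: e eF => [[e0|e0]|[[b i]|j]] eF /=.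
- by rewrite !inE.
- by rewrite !inE.
- by case: (I2_cases i) => ->; case: b eF => eF; rewrite !inE.
- move: eF; case: (I3_cases j) => -> eF.
  + by case/negP: h0.
  + by rewrite !inE !eqxx ?orbT.
  + by case/negP: h2.
Qed.

Lemma lb2 (F : {set pE D}) G : even_factor F G -> #|G| = 2 -> 2 * a + 2 <= excess F G.
Proof.
move=> ev cG.
have GT : G = setT by apply/eqP; rewrite eqEcard subsetT cardsT card_ord cG.
subst G; rewrite excess_dec isoxyE.
have [e0 l0] := copy_lb true ev; have [e1 l1] := copy_lb false ev.
have Ex1 : pth A j0 \notin F -> pth A j2 \notin F -> incid F setT (vx1 A) = 2 ->
           1 <= #|Ex F setT|.
  move=> h0 h2 h; apply: (@Ex_lb F setT k0); apply: (circ_of h) => d _.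
  apply/negP; rewrite inE => hd.
  have := closed_connect (S_closed h0 h2) hd.
  by case: (I2_cases d) => ->; rewrite !inE.
have := ev (vx1 A); have := ev (vx2 A); have := ev (vy1 A); have := ev (vy2 A).
rewrite incid_x1 incid_x2 incid_y1 incid_y2 in Ex1 *.
rewrite !in_setT.
lia.
Qed.

End D.


Section D.
Variable A : pole 2.
Notation D := (doubled A).

Definition mkF (F2 F0 : {set pE A}) (pp : 'I_3 -> bool) : {set pE D} :=
  [set e : dE A | match e with
                  | inl (inl e0) => e0 \in F2
                  | inl (inr e1) => e1 \in F0
                  | inr (inl (b, _)) => ~~ b
                  | inr (inr j) => pp j end].

Variables (F2 F0 : {set pE A}) (pp : 'I_3 -> bool).
Notation F := (mkF F2 F0 pp).

Lemma mk_conn b i : (conn A b i \in F) = ~~ b. Proof. by rewrite inE. Qed.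
Lemma mk_pth j : (pth A j \in F) = pp j. Proof. by rewrite inE. Qed.
Lemma mk_Fc0 : Fc F false = F2. Proof. by apply/setP => e; rewrite !inE. Qed.
Lemma mk_Fc1 : Fc F true = F0. Proof. by apply/setP => e; rewrite !inE. Qed.
Lemma mk_Gc0 : Gc F false = setT. Proof. by apply/setP => e; rewrite !inE. Qed.
Lemma mk_Gc1 : Gc F true = set0. Proof. by apply/setP => e; rewrite !inE. Qed.

Lemma mk_even G : even_factor F2 setT -> even_factor F0 set0 ->
  (forall k, incid F G (inr k) = 0 \/ incid F G (inr k) = 2) -> even_factor F G.
Proof.
move=> e2 e0 hk v; case: (dV_cases v) => [[b [w ->]]|[k ->]]; last exact: hk.
rewrite (incid_copy F G b w); case: b.
  by rewrite mk_Fc1 mk_Gc1.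
by rewrite mk_Fc0 mk_Gc0.
Qed.

Lemma Ex_comp G X : X \in Ex F G -> exists k, X = compF F (inr k) /\ X \in circuits F G.
Proof.
rewrite /Ex in_set => /andP[hX /existsP[k hk]]; exists k; split => //.
move: hX; rewrite inE => /andP[/existsP[u /andP[_ /eqP EX]] _].
by rewrite EX in hk *; exact: compF_same hk.
Qed.

Lemma Ex_le1 G : pp j0 -> pp j1 -> pp j2 -> #|Ex F G| <= 1.
Proof.
move=> p0 p1 p2.
have a0 : adjF F (vx1 A) (vy1 A) by apply: (@edge_adj _ _ F (pth A j0)); rewrite mk_pth.
have a1 : adjF F (vy1 A) (vy2 A) by apply: (@edge_adj _ _ F (pth A j1)); rewrite mk_pth.
have a2 : adjF F (vy2 A) (vx2 A) by apply: (@edge_adj _ _ F (pth A j2)); rewrite mk_pth.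
have hk : forall k, vy1 A \in compF F (inr k).
  move=> k; rewrite inE; case: (I4_cases k) => ->.
  - exact: connect1 a0.
  - by apply: (@connect_trans _ _ (vy2 A)); apply: connect1; rewrite adj_sym.
  - exact: connect0.
  - by apply: connect1; rewrite adj_sym.
rewrite -(cards1 (compF F (vy1 A))); apply: subset_leq_card; apply/subsetP => X.
case/Ex_comp => k [-> _]; rewrite inE; apply/eqP; exact: compF_same (hk k).
Qed.

Lemma Ex_0 : pp j0 -> pp j2 -> #|Ex F setT| = 0.
Proof.
move=> p0 p2.
have a0 : adjF F (vx1 A) (vy1 A) by apply: (@edge_adj _ _ F (pth A j0)); rewrite mk_pth.
have a2 : adjF F (vy2 A) (vx2 A) by apply: (@edge_adj _ _ F (pth A j2)); rewrite mk_pth.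
have hk : forall k, (vy1 A \in compF F (inr k)) || (vy2 A \in compF F (inr k)).
  move=> k; rewrite !inE; case: (I4_cases k) => ->.
  - by rewrite (connect1 a0).
  - by apply/orP; right; apply: connect1; rewrite adj_sym.
  - by rewrite connect0.
  - by rewrite connect0 orbT.
apply/eqP; rewrite cards_eq0; apply/eqP/setP => X; rewrite in_set0; apply/negP.
case/Ex_comp => k [EX hX].
move: hX; rewrite inE => /andP[_ /forallP hd].
case/orP: (hk k) => h.
  by move: (hd i0); rewrite in_setT /= EX; move/negP; apply.
by move: (hd i1); rewrite in_setT /= EX; move/negP; apply.
Qed.

End D.


Theorem lemma1 (A : pole 2) (a n : nat) :
  cubic_pole A -> t_is A (a + 2) a n ->
  t_is (doubled A) (2 * a + 4) (2 * a + 2) (2 * n + 4).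
Proof.
move=> _ [[[F0 [ev0 ex0]] hq0] [[F2 [G2 [ev2 [cG2 ex2]]]] hq2] hn].
have G2T : G2 = setT by apply/eqP; rewrite eqEcard subsetT cardsT card_ord cG2.
subst G2.
split.
- split; last by move=> F ev; apply: lb0 ev.
  set F := mkF F2 F0 (fun _ => true).
  have ev : even_factor F set0.
    apply: mk_even => // k; right; case: (I4_cases k) => ->.
    + by rewrite -[inr k0]/(vx1 A) incid_x1 !mk_conn !mk_pth.
    + by rewrite -[inr k1]/(vx2 A) incid_x2 !mk_conn !mk_pth.
    + by rewrite -[inr k2]/(vy1 A) incid_y1 !mk_pth in_set0.
    + by rewrite -[inr k3]/(vy2 A) incid_y2 !mk_pth in_set0.
  exists F; split => //; apply/eqP; rewrite eqn_leq (lb0 hq0 hq2 ev) andbT.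
  rewrite excess_dec mk_Fc0 mk_Fc1 mk_Gc0 mk_Gc1 ex2 ex0 isoxyE.
  rewrite incid_x1 incid_x2 incid_y1 incid_y2 !mk_conn !mk_pth !in_set0 /=.
  have : #|Ex F set0| <= 1 by apply: Ex_le1.
  set m := #|Ex F set0|; lia.
- split; last by move=> F G ev cG; apply: lb2 ev cG.
  set F := mkF F2 F0 (fun j => j != j1).
  have ev : even_factor F setT.
    apply: mk_even => // k; right; case: (I4_cases k) => ->.
    + by rewrite -[inr k0]/(vx1 A) incid_x1 !mk_conn !mk_pth.
    + by rewrite -[inr k1]/(vx2 A) incid_x2 !mk_conn !mk_pth.
    + by rewrite -[inr k2]/(vy1 A) incid_y1 !mk_pth in_setT.
    + by rewrite -[inr k3]/(vy2 A) incid_y2 !mk_pth in_setT.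
  exists F, setT; split => //; split; first by rewrite cardsT card_ord.
  apply/eqP; rewrite eqn_leq (lb2 hq0 hq2 ev) ?cardsT ?card_ord // andbT.
  rewrite excess_dec mk_Fc0 mk_Fc1 mk_Gc0 mk_Gc1 ex2 ex0 isoxyE.
  rewrite incid_x1 incid_x2 incid_y1 incid_y2 !mk_conn !mk_pth !in_setT /=.
  have -> : #|Ex F setT| = 0 by apply: Ex_0.
  lia.
- rewrite /nverts /= !card_sum card_ord; rewrite /nverts in hn; lia.
Qed.
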